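(* Let $(\beta,\alpha)$ satisfy $\beta\in(1,2)$ and $\alpha\in[0,2-\beta]$, and let $f=T_{\beta,\alpha}$, $T_{\beta,\alpha}(x)=\beta x+\alpha \pmod 1$ on $[0,1]$, with critical point $c=\frac{1-\alpha}{\beta}$. Fix $a\in[0,\frac{1-\alpha}{\beta}]$ and for $b\in[c,1]$ consider the hole $H=(a,b)$ and the survivor set $S_f(H)=\{x\in[0,1]: f^n(x)\notin H\ \forall n\ge0\}$. Then the function $\eta_f(a): b\mapsto \dim_{\mathcal H}(S_f(H))$ is a devil staircase, that is, $\eta_f(a)$ is non-increasing and locally constant at Lebesgue-almost every point.
   Context: $\dim_{\mathcal H}$ denotes Hausdorff dimension. *)

(* Defs.v *)
From HB Require Import structures.
From mathcomp Require Import all_boot all_order all_algebra.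
From mathcomp Require Import all_classical all_reals all_analysis.
Set Implicit Arguments. Unset Strict Implicit. Unset Printing Implicit Defensive.
Import Order.TTheory GRing.Theory Num.Theory.
Local Open Scope classical_set_scope.
Local Open Scope ring_scope.

Definition mod1 {R : realType} (x : R) : R := x - (Num.floor x)%:~R.

Definition T_ba {R : realType} (beta alpha : R) (x : R) : R := mod1 (beta * x + alpha).

Definition survivor {R : realType} (f : R -> R) (a b : R) : set R :=
  [set x | 0 <= x <= 1 /\ forall n : nat, ~ (a < iter n f x < b)].

(* diameter of a subset of R (used only for bounded sets; sup set0 = 0) *)
Definition diam {R : realType} (U : set R) : R :=
  sup [set `|x - y| | x in U & y in U].

Definition delta_cover {R : realType} (delta : R) (E : set R) (U : nat -> set R) :=
  E `<=` \bigcup_i U i /\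
  forall i, forall x y, U i x -> U i y -> `|x - y| <= delta.

Definition hausdorff_content {R : realType} (s delta : R) (E : set R) : \bar R :=
  ereal_inf [set (\sum_(0 <= i <oo) ((diam (U i)) `^ s)%:E)%E
            | U in [set U | delta_cover delta E U]].

Definition hausdorff_measure {R : realType} (s : R) (E : set R) : \bar R :=
  ereal_sup [set hausdorff_content s delta E | delta in [set d : R | 0 < d]].

(* Hausdorff dimension: inf { s > 0 | H^s(E) = 0 } (in \bar R; +oo if none) *)
Definition hausdorff_dim {R : realType} (E : set R) : \bar R :=
  ereal_inf [set s%:E | s in [set s : R | 0 < s /\ hausdorff_measure s E = 0%E]].

(* Main.v *)
Require Import Defs.
From HB Require Import structures.
From mathcomp Require Import all_boot all_order all_algebra.
From mathcomp Require Import all_classical all_reals all_analysis.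
From mathcomp Require Import ring lra.
From mathcomp Require Import measurable_realfun lebesgue_integral_differentiation.
Import Order.TTheory GRing.Theory Num.Theory.
Import numFieldNormedType.Exports.
Local Open Scope classical_set_scope.
Local Open Scope ring_scope.
Lemma hc_mono {R : realType} (s d : R) (E1 E2 : set R) : E1 `<=` E2 ->
  (hausdorff_content s d E1 <= hausdorff_content s d E2)%E.
Proof.
move=> E12; apply: ereal_inf_le_tmp => _ [U [cov dU] <-].
by exists U => //; split => // x /E12 /cov.
Qed.

Lemma hc_ge0 (R : realType) (s d : R) (E : set R) :
  (0 <= hausdorff_content s d E)%E.
Proof.
apply: le_ereal_inf_tmp => _ [U _ <-].
by apply: nneseries_ge0 => n _ _; rewrite lee_fin powR_ge0.
Qed.

Lemma hm_mono {R : realType} (s : R) (E1 E2 : set R) : E1 `<=` E2 ->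
  (hausdorff_measure s E1 <= hausdorff_measure s E2)%E.
Proof.
move=> E12; apply: ge_ereal_sup => _ [d d0 <-].
rewrite (le_trans (hc_mono s d _ _ E12)) //.
by apply: ereal_sup_ubound; exists d.
Qed.

Lemma hm_ge0 (R : realType) (s : R) (E : set R) :
  (0 <= hausdorff_measure s E)%E.
Proof.
apply: (@le_trans _ _ (hausdorff_content s 1 E)); first exact: hc_ge0.
by apply: ereal_sup_ubound; exists 1 => //=; exact: ltr01.
Qed.

Lemma hdim_mono {R : realType} (E1 E2 : set R) : E1 `<=` E2 ->
  (hausdorff_dim E1 <= hausdorff_dim E2)%E.
Proof.
move=> E12; apply: ereal_inf_le_tmp => _ [s [s0 hs] <-].
exists s => //; split => //.
apply/eqP; rewrite eq_le hm_ge0 andbT -hs; exact: hm_mono.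
Qed.

Definition isint {R : realType} (y : R) := exists m : int, y = m%:~R.

Lemma mod1_ge0 {R : realType} (x : R) : 0 <= mod1 x.
Proof. by rewrite /mod1 subr_ge0 floor_le. Qed.

Lemma mod1_lt1 {R : realType} (x : R) : mod1 x < 1.
Proof. rewrite /mod1 ltrBlDr; have := floorD1_gt x; by rewrite intrD addrC. Qed.

Lemma floor_loc {R : realType} (x : R) : ~ isint x ->
  exists2 d : R, 0 < d & forall z, `|z - x| < d -> Num.floor z = Num.floor x.
Proof.
move=> nx; have /andP[h1 h2] := floor_itv x.
have h1' : (Num.floor x)%:~R < x.
  rewrite lt_neqAle h1 andbT; apply/eqP => e; apply: nx; by exists (Num.floor x).
exists (Num.min (x - (Num.floor x)%:~R) ((Num.floor x + 1)%:~R - x)).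
  by rewrite lt_min !subr_gt0 h1' h2.
move=> z; rewrite lt_min => /andP[z1 z2]; apply: floor_def.
move: z1 z2; rewrite ltr_norml => /andP[z1 z3]; rewrite ltr_norml => /andP[z4 z5].
apply/andP; split; lra.
Qed.

Lemma T_01 {R : realType} (beta alpha x : R) :
  0 <= T_ba beta alpha x /\ T_ba beta alpha x < 1.
Proof. by rewrite /T_ba mod1_ge0 mod1_lt1. Qed.

Lemma iter_01 {R : realType} (beta alpha x : R) n : 0 <= x <= 1 ->
  0 <= iter n (T_ba beta alpha) x <= 1.
Proof.
case: n => [//|n] _; rewrite iterS; have [h1 h2] := T_01 beta alpha (iter n (T_ba beta alpha) x).
by rewrite h1 ltW.
Qed.

Lemma T_cont {R : realType} (beta alpha x : R) : 0 < beta ->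
  ~ isint (beta * x + alpha) ->
  forall e : R, 0 < e -> exists2 d : R, 0 < d &
    forall z, `|z - x| < d -> `|T_ba beta alpha z - T_ba beta alpha x| < e.
Proof.
move=> b0 nx e e0; have [d0 d00 hd] := floor_loc _ nx.
exists (Num.min (d0 / beta) (e / beta)); first by rewrite lt_min !divr_gt0.
move=> z; rewrite lt_min => /andP[z1 z2].
have hz : `|(beta * z + alpha) - (beta * x + alpha)| < d0.
  rewrite (_ : _ - _ = beta * (z - x)); last by ring.
  by rewrite normrM gtr0_norm // -ltr_pdivlMl // mulrC.
rewrite /T_ba /mod1 (hd _ hz).
rewrite (_ : _ - _ = beta * (z - x)); last by ring.
by rewrite normrM gtr0_norm // -ltr_pdivlMl // mulrC.
Qed.

Lemma iter_cont {R : realType} (beta alpha b : R) n : 0 < beta ->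
  (forall k, (k < n)%N -> ~ isint (beta * iter k (T_ba beta alpha) b + alpha)) ->
  forall e : R, 0 < e -> exists2 d : R, 0 < d &
    forall z, `|z - b| < d ->
      `|iter n (T_ba beta alpha) z - iter n (T_ba beta alpha) b| < e.
Proof.
move=> b0; elim: n => [|n IH] hn e e0.
  by exists e => // z.
have [d1 d10 hd1] := T_cont _ _ _ b0 (hn n (ltnSn n)) _ e0.
have [d2 d20 hd2] := IH (fun k hk => hn k (ltnW hk)) _ d10.
by exists d2 => // z hz; rewrite !iterS; apply: hd1; apply: hd2.
Qed.

Lemma surv_sub {R : realType} (beta alpha a b : R) n : 0 < beta ->
  (forall k, (k < n)%N -> ~ isint (beta * iter k (T_ba beta alpha) b + alpha)) ->
  a < iter n (T_ba beta alpha) b < b ->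
  exists2 e : R, 0 < e & forall b1 b2, `|b1 - b| < e -> `|b2 - b| < e ->
    survivor (T_ba beta alpha) a b1 `<=` survivor (T_ba beta alpha) a b2.
Proof.
move=> b0 hn /andP[ta tb].
set f := T_ba beta alpha; set t := iter n f b.
set eta := Num.min (t - a) (b - t) / 2.
have eta0 : 0 < eta by rewrite divr_gt0 // lt_min !subr_gt0 ta tb.
have eta1 : eta <= (t - a) / 2 by rewrite ler_pM2r // ge_min lexx.
have eta2 : eta <= (b - t) / 2 by rewrite ler_pM2r // ge_min lexx orbT.
have [d d0 hd] := iter_cont _ _ _ n b0 hn _ eta0.
exists (Num.min d eta); first by rewrite lt_min d0 eta0.
move=> b1 b2; rewrite !lt_min => /andP[h1d h1e] /andP[h2d h2e].
move=> x [x01 hx]; split => // m /andP[m1 m2].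
have m3 : b1 <= iter m f x.
  rewrite leNgt; apply/negP => m3; apply: (hx m); by rewrite m1 m3.
have hy : `|iter m f x - b| < d.
  move: h1d h2d h1e h2e; rewrite !ltr_norml => /andP[? ?] /andP[? ?] /andP[? ?] /andP[? ?].
  apply/andP; split; lra.
have := hd _ hy; rewrite ltr_norml -/f -/t => /andP[z1 z2].
apply: (hx (n + m)); rewrite iterD -/f.
move: h1e; rewrite ltr_norml => /andP[? ?].
apply/andP; split; lra.
Qed.

Definition Bset {R : realType} (beta alpha : R) : set R :=
  [set b | exists k, isint (beta * iter k (T_ba beta alpha) b + alpha)].

Lemma Bset_countable {R : realType} (beta alpha : R) : beta != 0 ->
  countable (Bset beta alpha).
Proof.
move=> b0.
have -> : Bset beta alpha = \bigcup_(k in [set: nat])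
   [set b | isint (beta * iter k (T_ba beta alpha) b + alpha)].
  by apply/seteqP; split => [b [k hk]|b [k _ hk]]; exists k.
apply: bigcup_countable; first exact: countableP.
move=> k _; elim: k => [|k IH].
  apply: (sub_countable (subset_card_le _)); last first.
    apply: (sub_countable (card_image_le (fun m : int => (m%:~R - alpha) / beta) setT)).
    exact: countableP.
  move=> b /= [m hm]; exists m => //.
  by rewrite -hm; field.
apply: (sub_countable (subset_card_le _)); last first.
  apply: (sub_countable (card_image_le
    (fun p : R * int => (p.1 + p.2%:~R - alpha) / beta)
    ([set b | isint (beta * iter k (T_ba beta alpha) b + alpha)] `*` setT))).
  by apply: countableX => //; exact: countableP.
move=> b /= hb; exists (T_ba beta alpha b, Num.floor (beta * b + alpha)).
  by split => //=; rewrite -iterSr.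
by rewrite /= /T_ba /mod1; field.
Qed.

Lemma T_meas {R : realType} (beta alpha : R) : 0 <= beta ->
  measurable_fun setT (T_ba beta alpha).
Proof.
move=> b0; rewrite /T_ba /mod1.
apply: measurable_funB.
  apply: nondecreasing_measurable => // x y xy.
  by rewrite lerD2r ler_wpM2l.
apply: nondecreasing_measurable => // x y xy.
by rewrite ler_int le_floor // lerD2r ler_wpM2l.
Qed.

Lemma iter_meas {R : realType} (beta alpha : R) n : 0 <= beta ->
  measurable_fun setT (iter n (T_ba beta alpha)).
Proof.
move=> b0; elim: n => [|n IH]; first exact: measurable_id.
rewrite (_ : iter n.+1 _ = T_ba beta alpha \o iter n (T_ba beta alpha)); last first.
  by apply/funext => x; rewrite iterS.
exact: measurableT_comp (T_meas _ _ b0) IH.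
Qed.

Lemma pos_meas {R : realType} (h : R -> R) : measurable_fun setT h ->
  measurable [set x | 0 < h x].
Proof.
move=> hm; have := hm measurableT _ (@measurable_itv _ `]0, +oo[).
rewrite setTI; congr measurable; apply/seteqP; split => x /=;
  by rewrite in_itv /= andbT.
Qed.

Definition Fset {R : realType} (beta alpha : R) : set R :=
  [set b | (1 - alpha) / beta < b <= 1 /\
    forall n, ~ ((1 - alpha) / beta < iter n.+1 (T_ba beta alpha) b < b)].

Lemma Fset_meas {R : realType} (beta alpha : R) : 0 <= beta ->
  measurable (Fset beta alpha).
Proof.
move=> b0; set c := (1 - alpha) / beta.
have -> : Fset beta alpha = [set b | 0 < b - c] `&` ~` [set b | 0 < b - 1] `&`
   \bigcap_n ~` ([set b | 0 < iter n.+1 (T_ba beta alpha) b - c] `&`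
                [set b | 0 < b - iter n.+1 (T_ba beta alpha) b]).
  apply/seteqP; split => b /=.
  - move=> [/andP[h1 h2] h3]; split; [split|].
    + by rewrite subr_gt0.
    + by rewrite subr_gt0 ltNge h2.
    + move=> n _ [h4 h5]; apply: (h3 n); apply/andP; split; rewrite -subr_gt0; [exact: h4|exact: h5].
  - move=> [[h1 h2] h3]; split.
      rewrite -/c; apply/andP; split; first by rewrite -subr_gt0.
      by rewrite leNgt; apply/negP => h; apply: h2; rewrite /= subr_gt0.
    move=> n /andP[h4 h5]; apply: (h3 n I); split => /=; by rewrite subr_gt0.
apply: measurableI; last first.
  apply: bigcapT_measurable => n; apply: measurableC; apply: measurableI.
    apply: pos_meas; apply: measurable_funB => //; exact: iter_meas.
  apply: pos_meas; apply: measurable_funB => //; exact: iter_meas.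
apply: measurableI; last apply: measurableC; apply: pos_meas;
  apply: measurable_funB => //; exact: measurable_id.
Qed.

Lemma bernoulli {R : realType} (beta : R) n : 1 <= beta ->
  1 + n%:R * (beta - 1) <= beta ^+ n.
Proof.
move=> b1; elim: n => [|n IH]; first by rewrite mul0r addr0 expr0.
rewrite exprS -natr1.
have h : 0 <= n%:R * (beta - 1) :> R by rewrite mulr_ge0 // subr_ge0.
nra.
Qed.

Lemma pow_unbounded {R : realType} (beta r : R) : 1 < beta -> 0 < r ->
  exists j, 2 < beta ^+ j * r.
Proof.
move=> b1 r0; exists (Num.trunc (2 / ((beta - 1) * r))).+1.
have h := truncnS_gt (2 / ((beta - 1) * r)).
set N : R := (Num.trunc _).+1%:R in h *.
have hb := bernoulli beta (Num.trunc (2 / ((beta - 1) * r))).+1 (ltW b1).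
rewrite -/N in hb.
have h2 : 2 < N * ((beta - 1) * r).
  by rewrite -ltr_pdivrMr // mulr_gt0 // subr_gt0.
nra.
Qed.

Lemma c_facts {R : realType} (beta alpha : R) : 1 < beta < 2 -> 0 <= alpha <= 2 - beta ->
  0 < (1 - alpha) / beta /\ beta * ((1 - alpha) / beta) + alpha = 1.
Proof.
move=> /andP[b1 b2] /andP[a0 a1]; split.
  by rewrite divr_gt0 //; lra.
by field; rewrite gt_eqF //; lra.
Qed.

Lemma floor_01 {R : realType} (x : R) : 0 <= x < 1 -> Num.floor x = 0.
Proof. by move=> h; apply: floor_def; rewrite add0r. Qed.

Lemma floor_12 {R : realType} (x : R) : 1 <= x < 2 -> Num.floor x = 1.
Proof. by move=> h; apply: floor_def. Qed.

Lemma step_lemma {R : realType} (beta alpha b r : R) j :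
  1 < beta < 2 -> 0 <= alpha <= 2 - beta ->
  ~ Bset beta alpha b -> 0 < r -> 0 <= b - r -> b <= 1 ->
  (forall y : R, b - r < y <= b -> iter j (T_ba beta alpha) y =
      iter j (T_ba beta alpha) b - beta ^+ j * (b - y)) ->
  ~ ((1 - alpha) / beta < iter j (T_ba beta alpha) b /\
     iter j (T_ba beta alpha) b - beta ^+ j * r < (1 - alpha) / beta) ->
  (forall y : R, b - r < y <= b -> iter j.+1 (T_ba beta alpha) y =
      iter j.+1 (T_ba beta alpha) b - beta ^+ j.+1 * (b - y)).
Proof.
move=> hb ha nB r0 br b1 P ncut y /andP[y1 y2].
have [c0 c1] := c_facts _ _ hb ha.
move: hb ha => /andP[hb1 hb2] /andP[ha1 ha2].
set c := (1 - alpha) / beta in c0 c1 ncut.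
set f := T_ba beta alpha in P ncut *.
set v := iter j f b in P ncut *.
have hy := P y ltac:(by rewrite y1 y2).
have /andP[v0 v1] : 0 <= v <= 1 by apply: iter_01; apply/andP; split; lra.
have /andP[y0 y1'] : 0 <= iter j f y <= 1 by apply: iter_01; apply/andP; split; lra.
have nw : ~ isint (beta * v + alpha) by move=> h; apply: nB; exists j.
have Bj0 : 0 < beta ^+ j by rewrite exprn_gt0 //; lra.
have hby : 0 <= beta ^+ j * (b - y) by rewrite mulr_ge0 //; lra.
have key : Num.floor (beta * iter j f y + alpha) = Num.floor (beta * v + alpha).
  have [vc|cv] := leP v c.
  - have w1 : beta * v + alpha < 1.
      have : beta * v + alpha <= 1 by rewrite -c1 lerD2r ler_pM2l //; lra.
      rewrite le_eqVlt => /orP[/eqP e|//]; exfalso; apply: nw; by exists 1.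
    rewrite !floor_01 //; apply/andP; split; nra.
  - have hc : c <= v - beta ^+ j * r.
      rewrite leNgt; apply/negP => h; apply: ncut; split => //.
    have hbr : beta ^+ j * (b - y) < beta ^+ j * r by rewrite ltr_pM2l //; lra.
    have w1 : beta * v + alpha < 2.
      have : beta * v + alpha <= 2 by nra.
      rewrite le_eqVlt => /orP[/eqP e|//]; exfalso; apply: nw; by exists 2.
    rewrite !floor_12 //; apply/andP; split; nra.
have fE : forall x, f x = beta * x + alpha - (Num.floor (beta * x + alpha))%:~R by [].
rewrite !iterS (fE (iter j f y)) (fE (iter j f b)) -/v key hy exprS.
ring.
Qed.

Lemma core {R : realType} (beta alpha b r : R) :
  1 < beta < 2 -> 0 <= alpha <= 2 - beta ->
  Fset beta alpha b -> ~ Bset beta alpha b -> 0 < r ->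
  r < (b - (1 - alpha) / beta) / 2 ->
  exists p q : R, [/\ b - r < p, q <= b,
    (b - (1 - alpha) / beta) * r / 4 <= q - p &
    forall y, p < y < q -> ~ Fset beta alpha y].
Proof.
move=> hb ha [/andP[cb b1] hF] nB r0 rsmall.
have [c0 c1] := c_facts _ _ hb ha.
set c := (1 - alpha) / beta in c0 c1 cb hF rsmall *.
set f := T_ba beta alpha in hF *.
have bpos : 0 < beta by move: hb => /andP[? ?]; lra.
have br : 0 <= b - r by lra.
pose P j := forall y : R, b - r < y <= b -> iter j f y = iter j f b - beta ^+ j * (b - y).
pose cut j := c < iter j f b /\ iter j f b - beta ^+ j * r < c.
have bound : forall j, P j -> beta ^+ j * r <= 2.
  move=> j Pj; have hy : b - r < b - r / 2 <= b by apply/andP; split; lra.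
  have := Pj _ hy; have /andP[v0 v1] : 0 <= iter j f (b - r / 2) <= 1.
    by apply: iter_01; apply/andP; split; lra.
  have /andP[w0 w1] : 0 <= iter j f b <= 1 by apply: iter_01; apply/andP; split; lra.
  move=> e; rewrite e in v0; nra.
have [j [Pj cj]] : exists j, P j /\ cut j.
  apply: contrapT => nc.
  have allP : forall j, P j.
    elim=> [|j IH]; first by move=> y _; rewrite expr0 mul1r /=; ring.
    apply: (step_lemma _ _ _ _ _ hb ha nB r0 br b1 IH) => hcut.
    by apply: nc; exists j.
  have [j hj] := pow_unbounded _ _ (proj1 (andP hb)) r0.
  have := bound j (allP j); lra.
case: j Pj cj => [|j] Pj [cj1 cj2].
  by move: cj2; rewrite expr0 mul1r /=; lra.
set v := iter j.+1 f b in Pj cj1 cj2.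
have vb : b <= v.
  rewrite leNgt; apply/negP => vb; apply: (hF j); by rewrite cj1 vb.
set B := beta ^+ j.+1 in Pj cj1 cj2 bound.
have B0 : 0 < B by rewrite exprn_gt0.
have Br := bound _ Pj; rewrite -/B in Br.
exists (b + (c - v) / B), (b + (b - r - v) / B).
have eB : forall z : R, B * (z / B) = z by move=> z; field; rewrite gt_eqF.
set p := (c - v) / B; set q := (b - r - v) / B.
have ep := eB (c - v); have eq := eB (b - r - v); rewrite -/p in ep; rewrite -/q in eq.
split.
- nra.
- nra.
- have : (b - c) * r * B <= 2 * (b - c) by nra.
  nra.
- move=> y /andP[y1 y2] hy; move: hy => [_ hy].
  apply: (hy j).
  have hJ : b - r < y <= b by apply/andP; split; nra.
  have m1 : 0 < B * (y - (b + p)) by rewrite mulr_gt0 // subr_gt0.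
  have m2 : 0 < B * ((b + q) - y) by rewrite mulr_gt0 // subr_gt0.
  move: hJ => /andP[hJ1 hJ2].
  rewrite -/f (Pj y ltac:(by rewrite hJ1 hJ2)); rewrite -/c -/v -/B; apply/andP; split; nra.
Qed.

Lemma ratio_bound {R : realType} (beta alpha x r : R) :
  1 < beta < 2 -> 0 <= alpha <= 2 - beta ->
  (Fset beta alpha `\` Bset beta alpha) x -> 0 < r ->
  r < (x - (1 - alpha) / beta) / 2 ->
  (lebesgue_measure ((Fset beta alpha `\` Bset beta alpha) `&` ball x r) *
    (lebesgue_measure (ball x r))^-1 <= (1 - (x - (1 - alpha) / beta) / 8)%:E)%E.
Proof.
move=> hb ha [xF xB] r0 rs.
have [p [q [h1 h2 h3 h4]]] := core _ _ _ _ hb ha xF xB r0 rs.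
set c := (1 - alpha) / beta in rs h3 *.
have cx : c < x by lra.
have pq : p < q by nra.
set A := Fset beta alpha `\` Bset beta alpha.
set I := [set` `]p, q[] : set R.
have Iball : I `<=` ball x r.
  move=> y; rewrite /I /= in_itv /= => /andP[y1 y2].
  rewrite ball_itv /= in_itv /=; apply/andP; split; lra.
have sub : A `&` ball x r `<=` ball x r `\` I.
  move=> y [[yF _] yb]; split => //; move=> yI; apply: (h4 y _ yF).
  by move: yI; rewrite /I /= in_itv.
have mI : measurable I by exact: measurable_itv.
have mA : measurable (A `&` ball x r).
  apply: measurableI; last exact: measurable_ball.
  apply: measurableD; first by apply: Fset_meas; lra.
  apply: countable_measurable; first by move=> t; exact: measurable_set1.
  apply: Bset_countable; rewrite gt_eqF //; lra.
have mB : measurable (ball x r `\` I).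
  by apply: measurableD => //; exact: measurable_ball.
have le0 := le_measure lebesgue_measure (mem_set mA) (mem_set mB) sub.
have eB : lebesgue_measure (ball x r `\` I) = ((r *+ 2) - (q - p))%:E.
  rewrite measureD //; last 2 first.
    exact: measurable_ball.
    by change (lebesgue_measure (ball x r) < +oo)%E; rewrite lebesgue_measure_ball ?ltry //; lra.
  rewrite setIidr //.
  have e1 := lebesgue_measure_ball x (ltW r0).
  have e2 : lebesgue_measure I = (q - p)%:E.
    by rewrite lebesgue_measure_itv /= lte_fin pq -EFinB.
  change (lebesgue_measure (ball x r) - lebesgue_measure I = (r *+ 2 - (q - p))%:E)%E.
  by rewrite e1 e2 -EFinB.
have le1 : (lebesgue_measure (A `&` ball x r) <= ((r *+ 2) - (q - p))%:E)%E.
  by rewrite -eB; exact: le0.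
rewrite lebesgue_measure_ball; last lra.
have r2 : (r *+ 2) != 0 by rewrite gt_eqF // mulrn_wgt0.
rewrite inver (negbTE r2).
have i0 : (0 <= ((r *+ 2)^-1)%:E)%E by rewrite lee_fin invr_ge0 ltW // mulrn_wgt0.
rewrite (le_trans (lee_wpmul2r i0 le1)) //.
rewrite -EFinM lee_fin.
have -> : r *+ 2 = 2 * r by rewrite mulr_natl.
rewrite ler_pdivrMr; last by rewrite mulr_gt0.
nra.
Qed.

Lemma Fset_negl {R : realType} (beta alpha : R) :
  1 < beta < 2 -> 0 <= alpha <= 2 - beta ->
  (@lebesgue_measure R).-negligible (Fset beta alpha).
Proof.
move=> hb ha.
have bpos : 0 < beta by move: hb => /andP[? ?]; lra.
have cB : countable (Bset beta alpha) by apply: Bset_countable; rewrite gt_eqF.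
have mB : measurable (Bset beta alpha).
  by apply: countable_measurable => // t; exact: measurable_set1.
have Bneg : (@lebesgue_measure R).-negligible (Bset beta alpha).
  by exists (Bset beta alpha); split => //; exact: countable_lebesgue_measure0.
set A := Fset beta alpha `\` Bset beta alpha.
have mA : measurable A by apply: measurableD => //; apply: Fset_meas; lra.
have Aneg : (@lebesgue_measure R).-negligible A.
  have [N [mN N0 hN]] := lebesgue_density mA.
  exists N; split => // x Ax; apply: hN => /= hcv.
  move: hcv; rewrite indicE mem_set // => hcv.
  have cx : (1 - alpha) / beta < x by case: Ax => [[/andP[? ?] _] _].
  have k0 : 0 < (x - (1 - alpha) / beta) / 8 by rewrite divr_gt0 // subr_gt0.
  have hnear : \forall r \near (0:R)^'+,
      (lebesgue_measure (A `&` ball x r) * (lebesgue_measure (ball x r))^-1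
        <= (1 - (x - (1 - alpha) / beta) / 8)%:E)%E.
    near=> r.
    apply: ratio_bound => //.
    near: r; apply: nbhs_right_lt; rewrite divr_gt0 // subr_gt0 //.
  have := cvge_le hnear hcv.
  rewrite lee_fin /= => h; have := h (at_right_proper_filter 0); lra.
apply: (negligibleS _ (negligibleU Aneg Bneg)).
move=> x Fx; case: (pselect (Bset beta alpha x)) => hx; [by right | by left].
Unshelve. all: by end_near.
Qed.

Theorem corollary1p4 (R : realType) (beta alpha a : R) :
  1 < beta < 2 -> 0 <= alpha <= 2 - beta ->
  0 <= a <= (1 - alpha) / beta ->
  let c := (1 - alpha) / beta in
  let eta := fun b : R => hausdorff_dim (survivor (T_ba beta alpha) a b) in
  (* non-increasing on [c,1] *)
  (forall b1 b2 : R, c <= b1 -> b1 <= b2 -> b2 <= 1 -> (eta b2 <= eta b1)%E) /\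
  (* locally constant at Lebesgue-a.e. point of [c,1] *)
  {ae (@lebesgue_measure R), forall b : R,
     c <= b <= 1 ->
     exists2 e : R, 0 < e &
       forall b' : R, c <= b' <= 1 -> `|b' - b| < e -> eta b' = eta b}.
Proof.
move=> hb ha haa c eta; split.
  move=> b1 b2 cb1 b12 b21; apply: hdim_mono.
  move=> x [x01 hx]; split => // n /andP[h1 h2]; apply: (hx n).
  by rewrite h1 /=; lra.
have bpos : 0 < beta by move: hb => /andP[? ?]; lra.
have c1neg : (@lebesgue_measure R).-negligible [set c].
  exists [set c]; split; [exact: measurable_set1| |by []].
  by apply: countable_lebesgue_measure0; exact: countable1.
have Bneg : (@lebesgue_measure R).-negligible (Bset beta alpha).
  exists (Bset beta alpha); split => //.
    apply: countable_measurable; first by move=> t; exact: measurable_set1.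
    by apply: Bset_countable; rewrite gt_eqF.
  by apply: countable_lebesgue_measure0; apply: Bset_countable; rewrite gt_eqF.
have Nneg := negligibleU (negligibleU c1neg Bneg) (Fset_negl _ _ hb ha).
apply: (negligibleS _ Nneg) => b /= nPb.
apply: contrapT => nN; apply: nPb => /andP[cb b1].
have bc : b != c by apply/eqP => e; apply: nN; left; left.
have nB : ~ Bset beta alpha b by move=> h; apply: nN; left; right.
have nF : ~ Fset beta alpha b by move=> h; apply: nN; right.
have cb' : c < b by rewrite lt_neqAle eq_sym bc cb.
have [n hn] : exists n, c < iter n.+1 (T_ba beta alpha) b < b.
  apply: contrapT => hn; apply: nF; split; first by rewrite cb' b1.
  by move=> n h; apply: hn; exists n.
have hint : forall k, (k < n.+1)%N -> ~ isint (beta * iter k (T_ba beta alpha) b + alpha).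
  by move=> k _ h; apply: nB; exists k.
have hab : a < iter n.+1 (T_ba beta alpha) b < b.
  move: hn haa => /andP[h1 h2] /andP[h3 h4]; apply/andP; split => //; rewrite -/c in h4; lra.
have [e e0 he] := surv_sub _ _ _ _ _ bpos hint hab.
exists e => // b' _ hb'.
have hbb : `|b - b| < e by rewrite subrr normr0.
rewrite /eta; congr hausdorff_dim; apply/seteqP; split.
  exact: he.
exact: he.
Qed.
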